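(* Fix $q\in[0,1)$. Let $\mathcal{X}_q$ be a two-sided infinite Mallows permutation with parameter $q$ and $(r_i)_{i\in\mathbb{Z}}$ its standard record representation. Then $\big(\mathcal{X}_q(r_{i+1})-\max\{\mathcal{X}_q(r_i),0\}\big)_{i\ge0}$ is a sequence of independent $\mathrm{Geom}_+(1-q)$ random variables.
   Context: $\mathrm{Geom}_+(p)$: $\mathbb{P}(G=k)=(1-p)^{k-1}p$ for $k\ge1$. A Mallows permutation on $\mathbb{N}$ with parameter $q$ is $(I_1,I_2,\dots)$ where $(B_{i,j})_{i,j\ge1}$ are independent Bernoulli$(1-q)$ and $I_i=\min\{j\notin\{I_1,\dots,I_{i-1}\}:B_{i,j}=1\}$. Two-sided infinite Mallows permutation: $\Pi_+,\Pi_-$ independent Mallows permutations on $\mathbb{N}$; $(M_i)_{i\ge1}$ independent with $\mathbb{P}(M_i=m)=q^{im}(1-q^i)$; $\Lambda_1\ge\Lambda_2\ge\dots\ge0$ with $|\{j:\Lambda_j=i\}|=M_i$ for $i\ge1$; $\ell_i=i-\Lambda_i$; $k_0>k_{-1}>\dots$ enumerate $\mathbb{Z}\setminus\{\ell_i:i\ge1\}$; $\mathcal{X}_q(\ell_i)=\Pi_+(i)$ and $\mathcal{X}_q(k_i)=1-\Pi_-(1-i)$ for $i\le0$. It is a.s. admissible, i.e. $|\{i\in\mathbb{N}:\mathcal{X}_q(i)\notin\mathbb{N}\}|+|\{i\in\mathbb{Z}\setminus\mathbb{N}:\mathcal{X}_q(i)\in\mathbb{N}\}|<\infty$. A record index of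 $\sigma$ is $r$ with $\sigma(r)>\sigma(k)$ for all $k<r$; for admissible $\sigma$ the record indices are infinite in both directions and the standard record representation is their increasing enumeration $(r_i)_{i\in\mathbb{Z}}$ indexed so that $\sigma(r_0)\le0<\sigma(r_1)$. *)

(* Defs.v *)
From HB Require Import structures.
From mathcomp Require Import all_boot all_order all_algebra.
From mathcomp Require Import all_classical all_reals all_analysis.
Set Implicit Arguments. Unset Strict Implicit. Unset Printing Implicit Defensive.
Import Order.TTheory GRing.Theory Num.Theory.
Local Open Scope classical_set_scope.
Local Open Scope ring_scope.

(* least element of a set of naturals (default 0 if there is none) *)
Definition nat_least (S : set nat) : nat :=
  xget 0%N (fun j => S j /\ forall j', S j' -> (j <= j')%N).

(* B i j (i, j >= 1) are the Bernoulli variables; I_i is the least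
   j >= 1 not among I_1..I_{i-1} with B i j = true. *)
Fixpoint mallows_prefix (B : nat -> nat -> bool) (n : nat) : seq nat :=
  match n with
  | 0 => [::]
  | n'.+1 =>
      let p := mallows_prefix B n' in
      rcons p (nat_least [set j | (0 < j)%N /\ j \notin p /\ B n'.+1 j])
  end.

Definition mallows (B : nat -> nat -> bool) (i : nat) : nat :=
  nth 0%N (mallows_prefix B i) i.-1.

Definition lambda_of (M : nat -> nat) : nat -> nat :=
  xget (fun _ => 0%N)
    (fun L : nat -> nat =>
       (forall j, (1 <= j)%N -> (L j.+1 <= L j)%N) /\
       (forall i, (1 <= i)%N ->
          ([set j | (1 <= j)%N /\ L j = i] #= `I_(M i))%card)).

Definition ell_of (M : nat -> nat) (i : nat) : int :=
  (i%:Z - (lambda_of M i)%:Z)%R.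

(* k_0 > k_{-1} > ... enumerates Z \ {ell_i : i >= 1}; only the values at
   indices i <= 0 are meaningful *)
Definition comp_enum (l : nat -> int) : int -> int :=
  xget (fun _ => 0%R)
    (fun k : int -> int =>
       (forall i j : int, j <= 0 -> i < j -> k i < k j) /\
       (forall z : int,
          (~ exists i, (1 <= i)%N /\ l i = z) <-> exists i : int, i <= 0 /\ k i = z)).

Definition two_sided_mallows (Pp Pm : nat -> nat) (M : nat -> nat) : int -> int :=
  let l := ell_of M in
  let k := comp_enum l in
  xget (fun _ => 0%R)
    (fun X : int -> int =>
       (forall i, (1 <= i)%N -> X (l i) = (Pp i)%:Z) /\
       (forall i : int, i <= 0 -> X (k i) = 1 - (Pm (absz (1 - i)))%:Z)).

Definition is_record (s : int -> int) (r : int) : Prop :=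
  forall k, k < r -> s k < s r.

Definition record_rep (s : int -> int) : int -> int :=
  xget (fun _ => 0%R)
    (fun r : int -> int =>
       (forall i j, i < j -> r i < r j) /\
       (forall x, is_record s x <-> exists i, r i = x) /\
       s (r 0) <= 0 /\ 0 < s (r 1)).

Definition record_gap (s : int -> int) (i : nat) : int :=
  let r := record_rep s in
  s (r (i.+1)%:Z) - Num.max (s (r i%:Z)) 0.

Definition geom_pmf (R : realType) (p : R) (k : int) : R :=
  if (0 < k)%R then (1 - p) ^+ (absz k).-1 * p else 0.

(* indices: inl (i,j) ~ B^+_{i,j}, inr (inl (i,j)) ~ B^-_{i,j}, inr (inr i) ~ M_i *)
Definition input_idx := ((nat * nat) + ((nat * nat) + nat))%type.

Definition input_valid (x : input_idx) : bool :=
  match x with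
  | inl (i, j) => (0 < i)%N && (0 < j)%N
  | inr (inl (i, j)) => (0 < i)%N && (0 < j)%N
  | inr (inr i) => (0 < i)%N
  end.

Definition input_val (T : Type) (Bp Bm : nat -> nat -> T -> bool)
  (M : nat -> T -> nat) (x : input_idx) (w : T) : nat :=
  match x with
  | inl (i, j) => nat_of_bool (Bp i j w)
  | inr (inl (i, j)) => nat_of_bool (Bm i j w)
  | inr (inr i) => M i w
  end.

Definition input_law (R : realType) (q : R) (x : input_idx) (v : nat) : R :=
  match x with
  | inl _ | inr (inl _) => if v == 1%N then 1 - q else if v == 0%N then q else 0
  | inr (inr i) => q ^+ (i * v) * (1 - q ^+ i)
  end.

Definition Xq (T : Type) (Bp Bm : nat -> nat -> T -> bool)
  (M : nat -> T -> nat) (w : T) : int -> int :=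
  two_sided_mallows (mallows (fun i j => Bp i j w))
                    (mallows (fun i j => Bm i j w)) (fun i => M i w).

(* Main.v *)
Require Import Defs.
From HB Require Import structures.
From mathcomp Require Import all_boot all_order all_algebra.
From mathcomp Require Import all_classical all_reals all_analysis.
From mathcomp Require Import zify ring.
Import Order.TTheory GRing.Theory Num.Theory.
Local Open Scope classical_set_scope.
Local Open Scope ring_scope.
Set Implicit Arguments. Unset Strict Implicit.
Lemma nat_least_ex (S : set nat) : (exists j, S j) ->
  exists j, S j /\ forall j', S j' -> (j <= j')%N.
Proof.
move=> [j Sj].
have ex : exists n, `[< S n >] by exists j; apply/asboolP.
case: (ex_minnP ex) => m /asboolP Sm Hm; exists m; split => // j' Sj'.
by apply: Hm; apply/asboolP.
Qed.

Lemma nat_leastP (S : set nat) : (exists j, S j) ->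
  S (nat_least S) /\ forall j', S j' -> (nat_least S <= j')%N.
Proof.
move=> /nat_least_ex ex.
exact: (@xgetPex _ 0%N (fun j => S j /\ forall j', S j' -> (j <= j')%N) ex).
Qed.

Lemma nat_least_eq (S : set nat) x : S x -> (forall j, S j -> (x <= j)%N) ->
  nat_least S = x.
Proof.
move=> Sx Hx; apply: xget_unique; first by split.
by move=> y [Sy Hy]; apply/eqP; rewrite eqn_leq Hy // Hx.
Qed.

Lemma nat_least0 (S : set nat) : (forall j, ~ S j) -> nat_least S = 0%N.
Proof. by move=> H; apply: xgetPN => x [/H]. Qed.

Lemma nat_least_pos (S : set nat) : nat_least S <> 0%N ->
  S (nat_least S) /\ forall j', S j' -> (nat_least S <= j')%N.
Proof.
move=> H; apply: nat_leastP.
apply: contrapT => /forallNP H'; apply: H; exact: nat_least0.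
Qed.

Definition rowset (B : nat -> nat -> bool) (p : seq nat) (i : nat) : set nat :=
  [set j | (0 < j)%N /\ j \notin p /\ B i j].

Lemma size_mp B n : size (mallows_prefix B n) = n.
Proof. by elim: n => //= n IH; rewrite size_rcons IH. Qed.

Lemma mp_S B n : mallows_prefix B n.+1 =
  rcons (mallows_prefix B n) (nat_least (rowset B (mallows_prefix B n) n.+1)).
Proof. by []. Qed.

Lemma mp_take B n m : (m <= n)%N -> take m (mallows_prefix B n) = mallows_prefix B m.
Proof.
elim: n => [|n IH]; first by rewrite leqn0 => /eqP ->.
rewrite leq_eqVlt => /orP [/eqP ->|]; first by rewrite take_oversize // size_mp.
rewrite ltnS => hm; rewrite mp_S -cats1 take_cat size_mp.
case: (ltnP m n) => h; first exact: IH.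
have -> : m = n by apply/eqP; rewrite eqn_leq hm h.
by rewrite subnn take0 cats0.
Qed.

Lemma mallowsS B n : mallows B n.+1 = nat_least (rowset B (mallows_prefix B n) n.+1).
Proof. by rewrite /mallows mp_S nth_rcons size_mp ltnn eqxx. Qed.

Lemma mp_nth B n i : (i < n)%N -> nth 0%N (mallows_prefix B n) i = mallows B i.+1.
Proof.
move=> hi; rewrite /mallows -(mp_take B hi) nth_take //.
Qed.

Lemma mp_mem B n i : (1 <= i <= n)%N -> mallows B i \in mallows_prefix B n.
Proof.
case: i => // i /andP [_ hi]; rewrite -(mp_nth B hi); apply: mem_nth; by rewrite size_mp.
Qed.

Definition good_rows (B : nat -> nat -> bool) :=
  forall i, (0 < i)%N -> forall N, exists j, (N < j)%N /\ B i j.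

Lemma mem_le_sumn (p : seq nat) x : x \in p -> (x <= sumn p)%N.
Proof.
elim: p => //= y p IH; rewrite in_cons => /orP [/eqP ->|/IH]; first exact: leq_addr.
by move=> h; apply: (leq_trans h); apply: leq_addl.
Qed.

Lemma mallows_good B : good_rows B -> forall n,
  (0 < mallows B n.+1)%N /\ mallows B n.+1 \notin mallows_prefix B n.
Proof.
move=> hB n; rewrite mallowsS.
have [j [hj Bj]] := hB n.+1 isT (sumn (mallows_prefix B n)).
have ex : exists j, rowset B (mallows_prefix B n) n.+1 j.
  exists j; split; first by apply: leq_ltn_trans hj.
  split => //; apply/negP => /mem_le_sumn h.
  by move: (leq_ltn_trans h hj); rewrite ltnn.
by have [[h1 [h2 _]] _] := nat_leastP ex.
Qed.

Lemma mallows_pos B : good_rows B -> forall i, (0 < i)%N -> (0 < mallows B i)%N.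
Proof. by move=> hB [|i] // _; case: (mallows_good hB i). Qed.

Lemma mallows_inj B : good_rows B -> forall i j, (0 < i)%N -> (0 < j)%N ->
  mallows B i = mallows B j -> i = j.
Proof.
move=> hB.
suff H : forall i j, (0 < i)%N -> (i < j)%N -> mallows B i <> mallows B j.
  move=> i j hi hj e; case: (ltngtP i j) => // h.
  - by case: (H _ _ hi h).
  - by case: (H _ _ hj h).
move=> i [|j] // hi hij e.
have [_ hn] := mallows_good hB j.
by move: hn; rewrite -e mp_mem // hi.
Qed.
Definition predD (D : set int) (y : int) : int :=
  xget 0 (fun d => D d /\ d < y /\ forall d', D d' -> d' < y -> d' <= d).
Definition succD (D : set int) (y : int) : int :=
  xget 0 (fun d => D d /\ y < d /\ forall d', D d' -> y < d' -> d <= d').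

Lemma predD_spec (D : set int) y : (exists d, D d /\ d < y) ->
  D (predD D y) /\ predD D y < y /\ forall d', D d' -> d' < y -> d' <= predD D y.
Proof.
move=> [d [Dd hd]].
have ex : exists n : nat, `[< D (y - 1 - n%:Z) >].
  exists (absz (y - 1 - d)%R); apply/asboolP.
  by have -> : y - 1 - (absz (y - 1 - d)%R)%:Z = d by lia.
case: (ex_minnP ex) => m /asboolP Dm Hm.
apply: (@xgetPex _ 0 (fun d => D d /\ d < y /\ forall d', D d' -> d' < y -> d' <= d)).
exists (y - 1 - m%:Z); split => //; split; first by lia.
move=> d' Dd' hd'.
have : (m <= absz (y - 1 - d')%R)%N.
  apply: Hm; apply/asboolP.
  by have -> : y - 1 - (absz (y - 1 - d')%R)%:Z = d' by lia.
lia.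
Qed.

Lemma succD_spec (D : set int) y : (exists d, D d /\ y < d) ->
  D (succD D y) /\ y < succD D y /\ forall d', D d' -> y < d' -> succD D y <= d'.
Proof.
move=> [d [Dd hd]].
have ex : exists n : nat, `[< D (y + 1 + n%:Z) >].
  exists (absz (d - y - 1)%R); apply/asboolP.
  by have -> : y + 1 + (absz (d - y - 1)%R)%:Z = d by lia.
case: (ex_minnP ex) => m /asboolP Dm Hm.
apply: (@xgetPex _ 0 (fun d => D d /\ y < d /\ forall d', D d' -> y < d' -> d <= d')).
exists (y + 1 + m%:Z); split => //; split; first by lia.
move=> d' Dd' hd'.
have : (m <= absz (d' - y - 1)%R)%N.
  apply: Hm; apply/asboolP.
  by have -> : y + 1 + (absz (d' - y - 1)%R)%:Z = d' by lia.
lia.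
Qed.

Definition unb_below (D : set int) := forall y, exists d, D d /\ d < y.
Definition unb_above (D : set int) := forall y, exists d, D d /\ y < d.

Lemma iter_lt (f : int -> int) x : (forall y, f y < y) ->
  forall m n, (m < n)%N -> iter n f x < iter m f x.
Proof.
move=> hf m n; elim: n => // n IH; rewrite ltnS leq_eqVlt => /orP [/eqP ->|h].
  by rewrite iterS hf.
by rewrite iterS (lt_trans (hf _)) // IH.
Qed.

Lemma iter_gt (f : int -> int) x : (forall y, y < f y) ->
  forall m n, (m < n)%N -> iter m f x < iter n f x.
Proof.
move=> hf m n; elim: n => // n IH; rewrite ltnS leq_eqVlt => /orP [/eqP ->|h].
  by rewrite iterS hf.
by rewrite iterS (lt_trans _ (hf _)) // IH.
Qed.

Lemma iter_inD (D : set int) (f : int -> int) x : (forall y, D (f y)) -> D x ->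
  forall n, D (iter n f x).
Proof. by move=> hf Dx [|n] //=; rewrite hf. Qed.

Lemma predD_cover (D : set int) : unb_below D -> forall n y z, D y -> D z -> z <= y ->
  (absz (y - z)%R <= n)%N -> exists m, iter m (predD D) y = z.
Proof.
move=> hD; elim=> [|n IH] y z Dy Dz hzy hn.
  by exists 0%N => /=; lia.
case: (eqVneq z y) => [->|hne]; first by exists 0%N.
have hlt : z < y by rewrite lt_neqAle hne hzy.
have [h1 [h2 h3]] := predD_spec (ex_intro _ z (conj Dz hlt)).
have := h3 _ Dz hlt => hz.
have [m hm] := IH _ _ h1 Dz hz ltac:(lia).
by exists m.+1; rewrite iterSr.
Qed.

Lemma succD_cover (D : set int) : unb_above D -> forall n y z, D y -> D z -> y <= z ->
  (absz (z - y)%R <= n)%N -> exists m, iter m (succD D) y = z.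
Proof.
move=> hD; elim=> [|n IH] y z Dy Dz hzy hn.
  by exists 0%N => /=; lia.
case: (eqVneq z y) => [->|hne]; first by exists 0%N.
have hlt : y < z by rewrite lt_neqAle eq_sym hne hzy.
have [h1 [h2 h3]] := succD_spec (ex_intro _ z (conj Dz hlt)).
have := h3 _ Dz hlt => hz.
have [m hm] := IH _ _ h1 Dz hz ltac:(lia).
by exists m.+1; rewrite iterSr.
Qed.

Lemma enum_down (D : set int) : unb_below D -> (exists Z, forall d, D d -> d < Z) ->
  exists k : int -> int, (forall i j, j <= 0 -> i < j -> k i < k j) /\
    (forall z, D z <-> exists i, i <= 0 /\ k i = z).
Proof.
move=> hD [Z hZ].
have hp y := predD_spec (hD y).
pose top := predD D Z.
exists (fun i => iter (absz i) (predD D) top); split.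
  move=> i j hj hij; apply: iter_lt; first by move=> y; case: (hp y) => _ [].
  lia.
move=> z; split.
  move=> Dz.
  have [Dt [_ ht]] := hp Z.
  have hzt : z <= top by apply: ht => //; apply: hZ.
  have [m hm] := predD_cover hD Dt Dz hzt (leqnn _).
  by exists (- m%:Z); split; [lia|]; rewrite abszN absz_nat.
move=> [i [_ <-]]; apply: iter_inD; first by move=> y; case: (hp y).
by case: (hp Z).
Qed.

Lemma enum_both (D : set int) d0 : D d0 -> unb_below D -> unb_above D ->
  exists r : int -> int, (forall i j, i < j -> r i < r j) /\
    (forall x, D x <-> exists i, r i = x) /\ r 1 = d0.
Proof.
move=> Dd0 hb ha.
have hp y := predD_spec (hb y).
have hs y := succD_spec (ha y).
have pl y : predD D y < y by case: (hp y) => _ [].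
have sg y : y < succD D y by case: (hs y) => _ [].
pose r i := if 1 <= i then iter (absz (i - 1)%R) (succD D) d0
            else iter (absz (1 - i)%R) (predD D) d0.
have rS : forall i, r i < r (i + 1).
  move=> i; rewrite /r.
  case: (lerP 1 i) => h1; case: (lerP 1 (i + 1)) => h2; try lia.
  - have -> : absz (i + 1 - 1)%R = (absz (i - 1)%R).+1 by lia.
    by rewrite iterS sg.
  - have -> : i = 0 by lia.
    by rewrite /= pl.
  - have -> : absz (1 - i)%R = (absz (1 - (i + 1))%R).+1 by lia.
    by rewrite iterS pl.
have rmono : forall n i, r i < r (i + n.+1%:Z).
  elim=> [|n IH] i; first exact: rS.
  apply: (lt_trans (IH i)).
  have -> : i + n.+2%:Z = (i + n.+1%:Z) + 1 by lia.
  exact: rS.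
exists r; split.
  move=> i j hij.
  have -> : j = i + (absz (j - i - 1)%R).+1%:Z by lia.
  exact: rmono.
split; last by rewrite /r lexx subrr.
move=> x; split.
  move=> Dx; case: (lerP d0 x) => h.
    have [m hm] := succD_cover ha Dd0 Dx h (leqnn _).
    exists (m%:Z + 1); rewrite /r.
    have -> : (1 <= m%:Z + 1) = true by apply/idP; lia.
    by have -> : absz (m%:Z + 1 - 1)%R = m by lia.
  have hx : x <= d0 by lia.
  have [m hm] := predD_cover hb Dd0 Dx hx (leqnn _).
  case: m hm => [|m] hm; first by move: h; rewrite -hm /= ltxx.
  exists (- m%:Z); rewrite /r.
  have -> : (1 <= - m%:Z) = false by apply/negbTE; rewrite -ltNge; lia.
  by have -> : absz (1 - - m%:Z)%R = m.+1 by lia.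
move=> [i <-]; rewrite /r; case: ifP => _; apply: iter_inD => //;
  by [move=> y; case: (hs y)| move=> y; case: (hp y)].
Qed.
Lemma lambda_mono (M : nat -> nat) j : (1 <= j)%N ->
  (lambda_of M j.+1 <= lambda_of M j)%N.
Proof.
rewrite /lambda_of; set P := (fun L : nat -> nat => _ /\ _).
case: (pselect (exists L, P L)) => [ex|nex].
  by have [h _] := xgetPex (fun _ => 0%N) ex; apply: h.
by rewrite xgetPN //= => L PL; apply: nex; exists L.
Qed.

Section Ell.
Variable M : nat -> nat.
Local Notation L := (lambda_of M).
Local Notation l := (ell_of M).

Lemma L_anti i j : (1 <= i)%N -> (i <= j)%N -> (L j <= L i)%N.
Proof.
move=> hi; elim: j => [|j IH]; first by rewrite leqn0 => /eqP h; move: hi; rewrite h.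
rewrite leq_eqVlt => /orP [/eqP ->//|]; rewrite ltnS => hij.
apply: leq_trans (IH hij); apply: lambda_mono; exact: leq_trans hij.
Qed.

Lemma ell_lt i j : (1 <= i)%N -> (i < j)%N -> l i < l j.
Proof.
move=> hi hij; rewrite /ell_of.
have := L_anti hi (ltnW hij); lia.
Qed.

Lemma ell_le i j : (1 <= i)%N -> (i <= j)%N -> l i <= l j.
Proof.
move=> hi; rewrite leq_eqVlt => /orP [/eqP ->//|h]; exact/ltW/ell_lt.
Qed.

Lemma ell_inj i j : (1 <= i)%N -> (1 <= j)%N -> l i = l j -> i = j.
Proof.
move=> hi hj e; case: (ltngtP i j) => // h.
- by move: (ell_lt hi h); rewrite e ltxx.
- by move: (ell_lt hj h); rewrite e ltxx.
Qed.

Lemma ell_grow i : (1 <= i)%N -> l 1 + (i.-1)%:Z <= l i.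
Proof.
elim: i => // i IH _; case: i IH => [|i] IH; first by rewrite addr0.
have := IH isT; have := ell_lt (i := i.+1) (j := i.+2) isT (ltnSn _); lia.
Qed.

Lemma L_ev_const : exists I, (1 <= I)%N /\ forall j, (I <= j)%N -> L j = L I.
Proof.
suff H : forall v i, (1 <= i)%N -> (L i <= v)%N ->
    exists I, (i <= I)%N /\ forall j, (I <= j)%N -> L j = L I.
  have [I [h1 h2]] := H _ 1%N isT (leqnn _); by exists I.
elim=> [|v IH] i hi hv.
  exists i; split => // j hj; have := L_anti hi hj; lia.
case: (pselect (forall j, (i <= j)%N -> L j = L i)) => [h|].
  by exists i.
move=> /existsNP [j /not_implyP [hij hne]].
have hlt : (L j < L i)%N by have := L_anti hi hij; lia.
have [I [h1 h2]] := IH j (leq_trans hi hij) ltac:(lia).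
exists I; split => //; exact: leq_trans h1.
Qed.

Definition Cset : set int := fun z => ~ exists i, (1 <= i)%N /\ l i = z.

Lemma Cset_below : unb_below Cset.
Proof.
move=> y; exists (Num.min y (l 1) - 1); split; last first.
  have := ge_min y y (l 1); rewrite lexx /=; lia.
move=> [i [hi e]]; have := ell_le (i := 1) isT hi; rewrite e.
have := ge_min (l 1) y (l 1); rewrite lexx orbT; lia.
Qed.

Lemma ell_cover : exists Z, forall z, Z <= z -> exists i, (1 <= i)%N /\ l i = z.
Proof.
have [I [hI hc]] := L_ev_const.
exists (l I) => z hz; exists (I + absz (z - l I)%R)%N; split; first lia.
rewrite /ell_of hc ?leq_addr //; rewrite /ell_of in hz; lia.
Qed.

Lemma Cset_bounded : exists Z, forall d, Cset d -> d < Z.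
Proof.
have [Z hZ] := ell_cover; exists Z => d Cd; rewrite ltNge; apply/negP => h.
exact: Cd (hZ _ h).
Qed.

Lemma comp_enum_spec : let k := comp_enum l in
  (forall i j : int, j <= 0 -> i < j -> k i < k j) /\
  (forall z : int, (~ exists i, (1 <= i)%N /\ l i = z) <-> exists i : int, i <= 0 /\ k i = z).
Proof.
rewrite /comp_enum /=.
have [k0 [h1 h2]] := enum_down Cset_below Cset_bounded.
match goal with |- context [xget ?x0 ?P] => have ex : exists k, P k end.
  by exists k0; split.
by have := xgetPex (fun _ => 0) ex.
Qed.

Local Notation k := (comp_enum l).

Lemma k_notl i j : i <= 0 -> (1 <= j)%N -> k i <> l j.
Proof.
move=> hi hj e; have [_ h] := comp_enum_spec.
have : ~ exists i0, (1 <= i0)%N /\ l i0 = k i by apply/h; exists i.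
by apply; exists j.
Qed.

Lemma k_inj i j : i <= 0 -> j <= 0 -> k i = k j -> i = j.
Proof.
move=> hi hj e; have [h _] := comp_enum_spec.
case: (ltgtP i j) => // hij.
- by move: (h _ _ hj hij); rewrite e ltxx.
- by move: (h _ _ hi hij); rewrite e ltxx.
Qed.

Variables Pp Pm : nat -> nat.

Lemma tsm_spec : let X := two_sided_mallows Pp Pm M in
  (forall i, (1 <= i)%N -> X (l i) = (Pp i)%:Z) /\
  (forall i : int, i <= 0 -> X (k i) = 1 - (Pm (absz (1 - i)%R))%:Z).
Proof.
rewrite /two_sided_mallows /=.
match goal with |- context [xget ?x0 ?P] => suff ex : exists X, P X end.
  by have := xgetPex (fun _ => 0) ex.
pose Q z v := (exists i, (1 <= i)%N /\ l i = z /\ v = (Pp i)%:Z) \/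
               (exists i : int, i <= 0 /\ k i = z /\ v = 1 - (Pm (absz (1 - i)%R))%:Z).
exists (fun z => xget 0 (Q z)); split.
  move=> i hi; apply: xget_unique; first by left; exists i.
  move=> v [[j [hj [e ->]]]|[j [hj [e _]]]].
    by rewrite (ell_inj hj hi e).
  by case: (k_notl hj hi e).
move=> i hi; apply: xget_unique; first by right; exists i.
move=> v [[j [hj [e _]]]|[j [hj [e ->]]]].
  by case: (k_notl hi hj (esym e)).
by rewrite (k_inj hj hi e).
Qed.

End Ell.
Lemma pigeon (pi : nat -> nat) : (forall i j, (0 < i)%N -> (0 < j)%N -> pi i = pi j -> i = j) ->
  (forall i, (0 < i)%N -> (0 < pi i)%N) ->
  forall B, exists i, (0 < i)%N /\ (B < pi i)%N.
Proof.
move=> hinj hpos B; apply: contrapT => /forallNP H.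
have hle i : (0 < i)%N -> (pi i <= B)%N.
  move=> hi; rewrite leqNgt; apply/negP => h; by apply: (H i).
have hu : uniq (map pi (iota 1 B.+1)).
  rewrite map_inj_in_uniq ?iota_uniq // => x y; rewrite !mem_iota => /andP [hx _] /andP [hy _].
  exact: hinj.
have hs : {subset map pi (iota 1 B.+1) <= iota 1 B}.
  move=> v /mapP [i]; rewrite mem_iota => /andP [hi _] ->.
  rewrite mem_iota hpos //=; have := hle i hi; lia.
have := uniq_leq_size hu hs; rewrite size_map !size_iota; lia.
Qed.

Section Records.
Variables (l : nat -> int) (k : int -> int) (X : int -> int) (pi pi' : nat -> nat).
Hypothesis hl : forall i j, (1 <= i)%N -> (i < j)%N -> l i < l j.
Hypothesis hk1 : forall i j, j <= 0 -> i < j -> k i < k j.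
Hypothesis hk2 : forall z, (~ exists i, (1 <= i)%N /\ l i = z) <-> exists i, i <= 0 /\ k i = z.
Hypothesis hXl : forall i, (1 <= i)%N -> X (l i) = (pi i)%:Z.
Hypothesis hXk : forall i, i <= 0 -> X (k i) = 1 - (pi' (absz (1 - i)%R))%:Z.
Hypothesis hpi_pos : forall i, (0 < i)%N -> (0 < pi i)%N.
Hypothesis hpi_inj : forall i j, (0 < i)%N -> (0 < j)%N -> pi i = pi j -> i = j.
Hypothesis hpi'_pos : forall i, (0 < i)%N -> (0 < pi' i)%N.
Hypothesis hpi'_inj : forall i j, (0 < i)%N -> (0 < j)%N -> pi' i = pi' j -> i = j.

Lemma l_le i j : (1 <= i)%N -> (i <= j)%N -> l i <= l j.
Proof. by move=> hi; rewrite leq_eqVlt => /orP [/eqP ->//|h]; exact/ltW/hl. Qed.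

Lemma l_rev i j : (1 <= i)%N -> (1 <= j)%N -> l i < l j -> (i < j)%N.
Proof.
move=> hi hj h; rewrite ltnNge; apply/negP => hji.
by move: (l_le hj hji); rewrite leNgt h.
Qed.

Lemma l_inj i j : (1 <= i)%N -> (1 <= j)%N -> l i = l j -> i = j.
Proof.
move=> hi hj e; case: (ltngtP i j) => // h.
- by move: (hl hi h); rewrite e ltxx.
- by move: (hl hj h); rewrite e ltxx.
Qed.

Lemma l_grow i : (1 <= i)%N -> l 1 + (i.-1)%:Z <= l i.
Proof.
elim: i => // i IH _; case: i IH => [|i] IH; first by rewrite addr0.
have := IH isT; have := hl (i := i.+1) (j := i.+2) isT (ltnSn _); lia.
Qed.

Lemma Xneg z : (~ exists i, (1 <= i)%N /\ l i = z) -> X z <= 0.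
Proof.
move=> h; have [i [hi <-]] := (proj1 (hk2 z)) h.
rewrite hXk //; have := hpi'_pos (i := absz (1 - i)%R) ltac:(lia); lia.
Qed.

Lemma below_l1 z : z < l 1 -> ~ exists i, (1 <= i)%N /\ l i = z.
Proof. move=> hz [i [hi e]]; have := l_le (i := 1) isT hi; rewrite e; lia. Qed.

Definition rec_time s := (1 <= s)%N /\ forall j, (1 <= j)%N -> (j < s)%N -> (pi j < pi s)%N.

Lemma R1 : is_record X (l 1).
Proof.
move=> y hy; rewrite hXl //; have := Xneg (below_l1 hy); have := hpi_pos (i := 1) isT; lia.
Qed.

Lemma R2 z : is_record X z -> l 1 <= z -> exists s, rec_time s /\ l s = z.
Proof.
move=> hz; rewrite le_eqVlt => /orP [/eqP <-|hlt].
  by exists 1%N; split => //; split => // j hj hj1; move: hj; rewrite leqNgt hj1.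
have hX := hz _ hlt; rewrite hXl // in hX.
have : exists i, (1 <= i)%N /\ l i = z.
  apply: contrapT => /Xneg; have := hpi_pos (i := 1) isT; lia.
move=> [s [hs e]]; exists s; split => //; split => // j hj hjs.
have := hz (l j); rewrite -e hXl // hXl // => h; have := h (hl hj hjs); lia.
Qed.

Lemma R3 s : rec_time s -> is_record X (l s).
Proof.
move=> [hs hrec] y hy; rewrite hXl //.
case: (pselect (exists i, (1 <= i)%N /\ l i = y)) => [[j [hj ej]]|hn].
  rewrite -ej in hy *; rewrite hXl //; have := hrec j hj (l_rev hj hs hy); lia.
have := Xneg hn; have := hpi_pos hs; lia.
Qed.

Lemma rec_unb N : exists s, (N < s)%N /\ rec_time s.
Proof.
pose mx := \max_(j < N.+1) pi j.
have hmx j : (j <= N)%N -> (pi j <= mx)%N.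
  move=> hj; have hjN : (j < N.+1)%N by rewrite ltnS.
  exact: (@leq_bigmax _ (fun i : 'I_N.+1 => pi i) (Ordinal hjN)).
have [i0 [hi0 hv0]] := pigeon hpi_inj hpi_pos mx.
have ex : exists i, (0 < i)%N && (mx < pi i)%N by exists i0; rewrite hi0 hv0.
case: (ex_minnP ex) => s /andP [hs hvs] hmin.
exists s; split.
  rewrite ltnNge; apply/negP => h; have := hmx _ h; lia.
split => // j hj hjs.
case: (leqP j N) => hjN; first by have := hmx _ hjN; lia.
have : (pi j <= mx)%N.
  rewrite leqNgt; apply/negP => h; have := hmin j; rewrite hj h /= => /(_ isT); lia.
lia.
Qed.

Lemma rec_above : unb_above (is_record X).
Proof.
move=> z; have [s [hs hr]] := rec_unb (absz (z - l 1)%R).+1.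
exists (l s); split; first exact: R3.
have := l_grow (proj1 hr); lia.
Qed.

Lemma k_le i j : j <= 0 -> i <= j -> k i <= k j.
Proof. move=> hj; rewrite le_eqVlt => /orP [/eqP ->//|h]; exact/ltW/hk1. Qed.

Lemma k_rev i j : i <= 0 -> j <= 0 -> k i < k j -> i < j.
Proof.
move=> hi hj h; rewrite ltNge; apply/negP => hji.
by move: (k_le hi hji); rewrite leNgt h.
Qed.

Lemma rec_below : unb_below (is_record X).
Proof.
move=> z.
pose y0 := Num.min z (l 1) - 1.
have hy0z : y0 < z by have := ge_min z z (l 1); rewrite lexx /= /y0; lia.
have hy0l : y0 < l 1 by have := ge_min (l 1) z (l 1); rewrite lexx orbT /y0; lia.
have [i0 [hi0 e0]] := (proj1 (hk2 y0)) (below_l1 hy0l).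
pose n0 := absz (1 - i0)%R.
have ex : exists v, `[< exists n, (n0 <= n)%N /\ pi' n = v >].
  by exists (pi' n0); apply/asboolP; exists n0.
case: (ex_minnP ex) => v /asboolP [ns [hns hv]] hmin.
have hn0 : (1 <= n0)%N by rewrite /n0; lia.
pose ys := k (1 - ns%:Z).
have hys : ys <= y0 by rewrite -e0; apply: k_le; lia.
exists ys; split; last by lia.
move=> y hy.
have hyl : y < l 1 by lia.
have [i [hi e]] := (proj1 (hk2 y)) (below_l1 hyl).
have hii : i < 1 - ns%:Z by apply: k_rev; [|lia|]; rewrite ?e //; lia.
rewrite -e hXk // /ys hXk; last lia.
have -> : absz (1 - (1 - ns%:Z))%R = ns by lia.
have hle : (v <= pi' (absz (1 - i)%R))%N.
  apply: hmin; apply/asboolP; exists (absz (1 - i)%R); split => //; lia.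
have hne : pi' (absz (1 - i)%R) <> pi' ns.
  move=> h; have := hpi'_inj (i := absz (1 - i)%R) (j := ns) ltac:(lia) ltac:(lia) h; lia.
lia.
Qed.

Lemma rr_spec : let r := record_rep X in
  (forall i j, i < j -> r i < r j) /\
  (forall x, is_record X x <-> exists i, r i = x) /\
  X (r 0) <= 0 /\ 0 < X (r 1).
Proof.
rewrite /record_rep /=.
match goal with |- context [xget ?x0 ?P] => suff ex : exists r, P r end.
  by have := xgetPex (fun _ => 0) ex.
have [r [h1 [h2 h3]]] := enum_both R1 rec_below rec_above.
exists r; split => //; split => //; split.
  apply: Xneg; apply: below_l1; rewrite -h3; exact: h1.
by rewrite h3 hXl //; have := hpi_pos (i := 1) isT; lia.
Qed.

Local Notation r := (record_rep X).

Lemma rr_le i j : i <= j -> r i <= r j.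
Proof.
have [h _] := rr_spec; rewrite le_eqVlt => /orP [/eqP ->//|hij]; exact/ltW/h.
Qed.

Lemma rr_rev i j : r i < r j -> i < j.
Proof. move=> h; rewrite ltNge; apply/negP => /rr_le; rewrite leNgt h. done. Qed.

Lemma rr1 : r 1 = l 1.
Proof.
have [hm [hr [h0 h1]]] := rr_spec.
have [j ej] := (proj1 (hr (l 1))) R1.
have hr1 : is_record X (r 1) by apply/hr; exists 1.
case: (ltgtP j 1) => hj.
- have hj0 : j <= 0 by lia.
  have := rr_le hj0; rewrite ej => h.
  have : X (l 1) <= X (r 0).
    move: h; rewrite le_eqVlt => /orP [/eqP ->//|h].
    by apply/ltW; apply: ((proj2 (hr (r 0))) (ex_intro _ 0 erefl)).
  rewrite hXl //; have := hpi_pos (i := 1) isT; lia.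
- have := hm _ _ hj; rewrite ej => h.
  have := Xneg (below_l1 h); lia.
- by rewrite -hj.
Qed.

Lemma rr_pos (i : nat) : (1 <= i)%N -> exists s, rec_time s /\ l s = r i%:Z.
Proof.
move=> hi; have [hm [hr _]] := rr_spec.
apply: R2; first by apply/hr; exists i%:Z.
by rewrite -rr1; apply: rr_le; lia.
Qed.

Definition tau (i : nat) : nat := xget 0%N (fun s => (1 <= s)%N /\ l s = r i%:Z).

Lemma tau_spec i : (1 <= i)%N -> rec_time (tau i) /\ l (tau i) = r i%:Z.
Proof.
move=> hi; have [s [hs e]] := rr_pos hi.
have : (1 <= tau i)%N /\ l (tau i) = r i%:Z.
  by apply: (@xgetPex _ 0%N (fun s => (1 <= s)%N /\ l s = r i%:Z)); exists s; split => //; case: hs.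
move=> [h1 h2]; split => //.
by rewrite (l_inj h1 (proj1 hs) (etrans h2 (esym e))).
Qed.

Lemma tau1 : tau 1 = 1%N.
Proof. have [[h1 _] e] := tau_spec (i := 1) isT; apply: l_inj => //; by rewrite e rr1. Qed.

Lemma tau_lt i j : (1 <= i)%N -> (i < j)%N -> (tau i < tau j)%N.
Proof.
move=> hi hij; have [[h1 _] e1] := tau_spec hi; have [[h2 _] e2] := tau_spec (leq_trans hi (ltnW hij)).
apply: l_rev => //; rewrite e1 e2; have [hm _] := rr_spec; apply: hm; lia.
Qed.

Lemma tau_onto s : rec_time s -> exists i, (1 <= i)%N /\ tau i = s.
Proof.
move=> hs; have [hm [hr _]] := rr_spec.
have [j ej] := (proj1 (hr (l s))) (R3 hs).
have hj : 1 <= j.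
  rewrite leNgt; apply/negP => hj.
  have := hm _ _ hj; rewrite ej rr1 => h.
  have := l_le (i := 1) isT (proj1 hs); lia.
exists (absz j); split; first lia.
have [[h1 _] e] := tau_spec (i := absz j) ltac:(lia).
apply: l_inj => //; first by case: hs.
by rewrite e -ej; congr r; lia.
Qed.

Definition gapp (i : nat) : int :=
  (pi (tau i.+1))%:Z - (if i == 0%N then 0 else (pi (tau i))%:Z).

Lemma record_gapE i : record_gap X i = gapp i.
Proof.
rewrite /record_gap /gapp /=.
have [[_ _] e1] := tau_spec (i := i.+1) isT.
rewrite -e1 hXl; last by have [[]] := tau_spec (i := i.+1) isT.
congr (_ - _).
case: i e1 => [|i] e1 /=.
  have [_ [_ [h0 _]]] := rr_spec; by apply/max_idPr.
have [[h1 _] e2] := tau_spec (i := i.+1) isT.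
rewrite -e2 hXl //; apply/max_idPl; have := hpi_pos h1; lia.
Qed.
End Records.
Fixpoint go (pi : nat -> nat) (a : nat -> int) (n b t m k : nat) {struct b} : bool :=
  if (n < k)%N then true else
  match b with
  | 0 => false
  | b'.+1 =>
      let v := pi t.+1 in
      if v == 0%N then false else
      if (v <= m)%N then go pi a n b' t.+1 m k
      else (v%:Z == m%:Z + a k) && go pi a n b' t.+1 v k.+1
  end.

Section Walk.
Variables (pi tau : nat -> nat) (a : nat -> int) (n : nat).
Hypothesis hpi_pos : forall i, (0 < i)%N -> (0 < pi i)%N.
Hypothesis hpi_inj : forall i j, (0 < i)%N -> (0 < j)%N -> pi i = pi j -> i = j.
Hypothesis htau_rec : forall i, (1 <= i)%N -> rec_time pi (tau i).
Hypothesis htau1 : tau 1 = 1%N.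
Hypothesis htau_lt : forall i j, (1 <= i)%N -> (i < j)%N -> (tau i < tau j)%N.
Hypothesis htau_onto : forall s, rec_time pi s -> exists i, (1 <= i)%N /\ tau i = s.

Definition gapt (i : nat) : int :=
  (pi (tau i.+1))%:Z - (if i == 0%N then 0 else (pi (tau i))%:Z).

Lemma tau_le i j : (1 <= i)%N -> (i <= j)%N -> (tau i <= tau j)%N.
Proof. by move=> hi; rewrite leq_eqVlt => /orP [/eqP ->//|h]; exact/ltnW/htau_lt. Qed.

Lemma tau_rev i j : (1 <= i)%N -> (1 <= j)%N -> (tau i < tau j)%N -> (i < j)%N.
Proof.
move=> hi hj h; rewrite ltnNge; apply/negP => hji.
by move: (tau_le hj hji); rewrite leqNgt h.
Qed.

Lemma tau_pos i : (1 <= i)%N -> (1 <= tau i)%N.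
Proof. by move=> /htau_rec []. Qed.

Lemma max_before k : (1 <= k)%N -> forall j, (1 <= j)%N -> (j < tau k.+1)%N ->
  (pi j <= pi (tau k))%N.
Proof.
move=> hk j; elim: j {-2}j (leqnn j) => [|N IH] j hjN hj hjt; first by move: hj; lia.
case: (pselect (rec_time pi j)) => [hr|hnr].
  have [i [hi ei]] := htau_onto hr.
  have hik : (i < k.+1)%N by apply: tau_rev => //; rewrite ei.
  rewrite -ei; case: (ltngtP i k) => hik'.
  - by apply: ltnW; have [_ h] := htau_rec hk; apply: h; [exact: tau_pos|exact: htau_lt].
  - by move: hik; lia.
  - by rewrite hik'.
have : exists j', (1 <= j')%N /\ (j' < j)%N /\ (pi j <= pi j')%N.
  apply: contrapT => hne; apply: hnr; split => // j' hj' hj'j.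
  rewrite ltnNge; apply/negP => hle; apply: hne; by exists j'.
move=> [j' [hj' [hj'j hle]]].
apply: leq_trans hle _; apply: IH => //; first lia.
exact: ltn_trans hj'j hjt.
Qed.

Definition Inv (t m k : nat) :=
  (k = 0%N /\ t = 0%N /\ m = 0%N) \/
  [/\ (1 <= k)%N, (tau k <= t)%N, (t < tau k.+1)%N & m = pi (tau k)].

Lemma Inv_lt t m k : Inv t m k -> (t < tau k.+1)%N.
Proof. by case=> [[-> [-> _]]|[]]; rewrite ?htau1. Qed.

Lemma step_a t m k : Inv t m k -> (t.+1 < tau k.+1)%N ->
  (pi t.+1 <= m)%N /\ Inv t.+1 m k.
Proof.
case=> [[-> [-> _]]|[hk h1 h2 ->]]; first by rewrite htau1.
split; first by apply: max_before.
by right; split => //; apply: leqW.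
Qed.

Lemma step_b t m k : Inv t m k -> t.+1 = tau k.+1 ->
  (m < pi t.+1)%N /\ Inv t.+1 (pi t.+1) k.+1 /\ gapt k = (pi t.+1)%:Z - m%:Z.
Proof.
move=> hI e.
have hI2 : Inv t.+1 (pi t.+1) k.+1.
  right; split => //; first by rewrite e.
    by rewrite e; apply: htau_lt.
  by rewrite e.
case: hI => [[hk0 [ht0 hm0]]|[hk h1 h2 hm]].
  subst; split; first exact: hpi_pos.
  by split => //; rewrite /gapt -e /= subr0.
split.
  rewrite hm e; have [_ h] := htau_rec (i := k.+1) isT; apply: h; first exact: tau_pos.
  exact: htau_lt.
split => //; rewrite /gapt -e hm; by case: k hk {e h1 h2 hm hI2}.
Qed.

Lemma go_iff b : forall t m k, Inv t m k -> (k <= n.+1)%N ->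
  (go pi a n b t m k <->
   ((forall i, (k <= i <= n)%N -> gapt i = a i) /\ ((n < k)%N \/ (tau n.+1 <= b + t)%N))).
Proof.
elim: b => [|b IH] t m k hI hk /=.
  case: ifP => hnk.
    split => // _; split; [move=> i; lia| by left].
  split => // [[_ [h|h]]]; first by rewrite h in hnk.
  have := Inv_lt hI; have := tau_le (i := k.+1) isT (j := n.+1) ltac:(lia); lia.
case: ifP => hnk.
  split => // _; split; [move=> i; lia| by left].
have hv := hpi_pos (i := t.+1) isT; rewrite (negbTE (lt0n_neq0 hv)).
have := Inv_lt hI; rewrite leq_eqVlt => /orP [/eqP e|hlt].
  have [hmv [hI' hg]] := step_b hI e.
  have hk' : (k.+1 <= n.+1)%N by lia.
  have IH' := IH _ _ _ hI' hk'.
  rewrite leqNgt hmv /=.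
  split.
    move=> /andP [/eqP hv' /IH' [hall hb]]; split.
      move=> i /andP [hki hin]; case: (ltngtP k i) => hki'.
      - by apply: hall; lia.
      - lia.
      - by rewrite -hki' hg hv'; lia.
    right; case: hb => [hb|hb]; last lia.
    have ekn : k = n by lia.
    rewrite -ekn -e; lia.
  move=> [hall hb]; apply/andP; split.
    by apply/eqP; rewrite -(hall k ltac:(lia)) hg; lia.
  apply/IH'; split; first by move=> i hi; apply: hall; lia.
  case: hb => [|hb]; [lia|right; lia].
have [hvm hI'] := step_a hI hlt.
rewrite hvm (IH _ _ _ hI' hk).
by split => [[h1 h2]|[h1 h2]]; split => //; case: h2 => h2; try (by left); right; lia.
Qed.

Lemma sum_gapt k : (pi (tau k.+1))%:Z = \sum_(i < k.+1) gapt i.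
Proof.
elim: k => [|k IH]; first by rewrite big_ord1 /gapt /= subr0.
rewrite big_ord_recr /= -IH /gapt /=; lia.
Qed.

Lemma tau_le_pi i : (1 <= i)%N -> (tau i <= pi (tau i))%N.
Proof.
move=> hi; have [hT hrec] := htau_rec hi.
set T := tau i in hT hrec *.
have hu : uniq (map pi (iota 1 T)).
  rewrite map_inj_in_uniq ?iota_uniq // => x y; rewrite !mem_iota => /andP [hx _] /andP [hy _].
  exact: hpi_inj.
have hs : {subset map pi (iota 1 T) <= iota 1 (pi T)}.
  move=> v /mapP [j]; rewrite mem_iota => /andP [hj hjT] ->.
  rewrite mem_iota hpi_pos //=.
  case: (ltngtP j T) => hjT'.
  - have := hrec j hj hjT'; lia.
  - lia.
  - rewrite hjT'; lia.
by have := uniq_leq_size hu hs; rewrite size_map !size_iota.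
Qed.

Definition Sb := (\sum_(i < n.+1) absz (a i))%N.

Lemma go_main : go pi a n Sb.+1 0 0 0 <-> forall i, (i <= n)%N -> gapt i = a i.
Proof.
have hI : Inv 0 0 0 by left.
rewrite (go_iff Sb.+1 hI isT); split => [[h _] i hi|h]; first by apply: h.
split; first by move=> i /andP [_ hi]; apply: h.
right; rewrite addn0.
have := tau_le_pi (i := n.+1) isT.
have := sum_gapt n.
have -> : \sum_(i < n.+1) gapt i = \sum_(i < n.+1) a i.
  by apply: eq_bigr => i _; apply: h; rewrite -ltnS.
have : \sum_(i < n.+1) a i <= (Sb%:Z).
  rewrite /Sb; elim/big_ind2: _ => //.
    by move=> x1 x2 y1 y2 h1 h2; rewrite PoszD; apply: lerD.
  by move=> i _; lia.
lia.
Qed.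
End Walk.
Lemma det_main (Bp Bm : nat -> nat -> bool) (M : nat -> nat) (a : nat -> int) (n : nat) :
  good_rows Bp -> good_rows Bm ->
  (go (mallows Bp) a n (Sb a n).+1 0 0 0 <->
   forall i, (i <= n)%N -> record_gap (two_sided_mallows (mallows Bp) (mallows Bm) M) i = a i).
Proof.
move=> gp gm.
have hl := @ell_lt M.
have [hk1 hk2] := comp_enum_spec M.
have [hXl hXk] := tsm_spec M (mallows Bp) (mallows Bm).
have hp1 := mallows_pos gp; have hi1 := mallows_inj gp.
have hp2 := mallows_pos gm; have hi2 := mallows_inj gm.
have E := record_gapE hl hk1 hk2 hXl hXk hp1 hi1 hp2 hi2.
have hrec : forall i, (1 <= i)%N ->
    rec_time (mallows Bp) (tau (ell_of M) (two_sided_mallows (mallows Bp) (mallows Bm) M) i).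
  by move=> i hi; case: (tau_spec hl hk1 hk2 hXl hXk hp1 hi1 hp2 hi2 hi).
rewrite (go_main a n hp1 hi1 hrec (tau1 hl hk1 hk2 hXl hXk hp1 hi1 hp2 hi2)
  (tau_lt hl hk1 hk2 hXl hXk hp1 hi1 hp2 hi2) (tau_onto hl hk1 hk2 hXl hXk hp1 hi1 hp2 hi2)).
by split => h i hi; [rewrite E; apply: h | move: (h i hi); rewrite E].
Qed.

Lemma pow_small (R : realType) (q x : R) : 0 <= q -> q < 1 ->
  (forall K : nat, x <= q ^+ K) -> x <= 0.
Proof.
move=> hq0 hq1 hx.
have hc : (fun K : nat => q ^+ K) @ \oo --> 0%R by apply: cvg_expr; rewrite ger0_norm.
case: (lerP x 0) => // hx0.
have := cvgr0_norm_lt (fun K : nat => q ^+ K) hc x hx0.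
move=> [N _ HN].
have := HN N (leqnn N); rewrite /= ger0_norm ?exprn_ge0 // => h.
have := hx N; rewrite leNgt h //.
Qed.

Definition cnt (p : seq nat) (x : nat) : nat := count (fun j => j \notin p) (iota 1 x.-1).

Lemma prod_const_seq (R : realType) (s : seq nat) (P : pred nat) (c : R) :
  \prod_(j <- s | P j) c = c ^+ count P s.
Proof.
elim: s => [|x s IH]; first by rewrite big_nil.
rewrite big_cons /=; case: (P x) => /=; last by rewrite add0n IH.
by rewrite IH exprS.
Qed.

Section Prob.
Variables (R : realType) (d : measure_display) (T : measurableType d).
Variable (P : probability T R).
Variables (q : R) (hq0 : 0 <= q) (hq1 : q < 1).
Variables (Bp Bm : nat -> nat -> T -> bool) (M : nat -> T -> nat).
Hypothesis Hmeas : forall (x : input_idx) (v : nat), input_valid x ->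
     measurable [set w | input_val Bp Bm M x w = v].
Hypothesis Hind : forall (s : seq input_idx) (v : input_idx -> nat),
     uniq s -> all input_valid s ->
     P (\big[setI/setT]_(x <- s) [set w | input_val Bp Bm M x w = v x])
       = (\prod_(x <- s) input_law q x (v x))%:E.

Definition cyl (s : seq input_idx) (v : input_idx -> nat) : set T :=
  \big[setI/setT]_(x <- s) [set w | input_val Bp Bm M x w = v x].

Lemma cyl_meas s v : all input_valid s -> measurable (cyl s v).
Proof.
elim: s => [|x s IH]; first by rewrite /cyl big_nil.
rewrite /= => /andP [hx hs]; rewrite /cyl big_cons; apply: measurableI; first exact: Hmeas.
exact: IH.
Qed.

Lemma cyl_mem s v w : cyl s v w <-> forall x, x \in s -> input_val Bp Bm M x w = v x.
Proof.
elim: s => [|x s IH]; first by rewrite /cyl big_nil; split.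
rewrite /cyl big_cons; split.
  move=> [h1 /IH h2] y; rewrite in_cons => /orP [/eqP ->//|]; exact: h2.
move=> h; split; first by apply: h; rewrite in_cons eqxx.
by apply/IH => y hy; apply: h; rewrite in_cons hy orbT.
Qed.

Local Notation Bw w := (fun i j => Bp i j w).

Definition Cp (p : seq nat) : set T := [set w | mallows_prefix (Bw w) (size p) = p].

Definition rowc (p : seq nat) (x : nat) : seq input_idx :=
  [seq (inl ((size p).+1, j) : input_idx) | j <- [seq j <- iota 1 x | j \notin p]].

Definition rowv (p : seq nat) (x : nat) (v : input_idx -> nat) : input_idx -> nat :=
  fun y => match y with
           | inl (i, j) => if i == (size p).+1 then nat_of_bool (j == x) else v y
           | _ => v y end.

Definition rowsok (t : nat) (s : seq input_idx) :=
  all (fun y => if y is inl (i, _) then (0 < i <= t)%N else false) s.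

Definition cylrep p s v := [/\ uniq s, all input_valid s, rowsok (size p) s & Cp p = cyl s v].

Lemma Cp_rcons p x : Cp (rcons p x) =
  Cp p `&` [set w | nat_least (rowset (Bw w) p (size p).+1) = x].
Proof.
rewrite /Cp; apply/seteqP; split => w.
  move=> h; move: h; rewrite /= size_rcons mp_S => e.
  have e1 := congr1 (last 0%N) e; have e2 := congr1 (take (size p)) e.
  rewrite !last_rcons in e1.
  rewrite -!cats1 take_size_cat ?size_mp // take_size_cat // in e2.
  by split => //; rewrite e2 in e1.
move=> [h1 h2]; rewrite /= size_rcons mp_S; rewrite h1 in h2 *; by rewrite h2.
Qed.

Lemma row_event p x w : (0 < x)%N -> x \notin p ->
  (nat_least (rowset (Bw w) p (size p).+1) = x <->
   cyl (rowc p x) (rowv p x (fun _ => 0%N)) w).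
Proof.
move=> hx hxp; rewrite cyl_mem; split.
  move=> e y /mapP [j]; rewrite mem_filter mem_iota => /andP [hjp /andP [hj1 hjx]] ->.
  rewrite /= eqxx.
  have hne : nat_least (rowset (Bw w) p (size p).+1) <> 0%N by rewrite e; lia.
  have [[_ [_ hB]] hmin] := nat_least_pos hne; rewrite e in hB hmin.
  case: (eqVneq j x) => [->|hjx']; first by rewrite hB.
  case hb : (Bp (size p).+1 j w) => //=.
  have := hmin j; rewrite /rowset /=; move=> /(_ (conj hj1 (conj hjp hb))); lia.
move=> h; apply: nat_least_eq.
  split => //; split => //.
  have hin : (inl ((size p).+1, x) : input_idx) \in rowc p x.
    by apply/mapP; exists x => //; rewrite mem_filter hxp mem_iota hx /=; lia.
  have := h _ hin; rewrite /= eqxx eqxx; by case: (Bp _ _ w).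
move=> j [hj [hjp hb]]; rewrite leqNgt; apply/negP => hjx.
have hin : (inl ((size p).+1, j) : input_idx) \in rowc p x.
  by apply/mapP; exists j => //; rewrite mem_filter hjp mem_iota hj /=; lia.
have := h _ hin; rewrite /= eqxx (ltn_eqF hjx) hb //.
Qed.

Lemma cylrep_step p x s v : uniq p -> (0 < x)%N -> x \notin p -> cylrep p s v ->
  cylrep (rcons p x) (s ++ rowc p x) (rowv p x v).
Proof.
move=> hu hx hxp [hs1 hs2 hs3 hs4]; split.
- rewrite cat_uniq hs1 /=; apply/andP; split.
    apply/hasPn => y /mapP [j _ ->]; apply/negP => hy.
    by move: hs3 => /allP /(_ _ hy) /=; lia.
  rewrite map_inj_uniq ?filter_uniq ?iota_uniq // => j1 j2 []. done.
- rewrite all_cat hs2 /=; apply/allP => y /mapP [j]; rewrite mem_filter mem_iota => /andP [_ /andP [hj _]] -> /=.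
  by rewrite hj.
- rewrite /rowsok all_cat size_rcons; apply/andP; split.
    apply/allP => y hy; move: hs3 => /allP /(_ _ hy); case: y {hy} => // [[i j]] /andP [h1 h2].
    by rewrite h1 /= ltnW.
  by apply/allP => y /mapP [j _ ->] /=; rewrite leqnn.
- rewrite Cp_rcons hs4; apply/seteqP; split => w.
    move=> [hw1 /(row_event w hx hxp) hw2]; apply/cyl_mem => y; rewrite mem_cat => /orP [hy|hy].
      have -> : rowv p x v y = v y.
        move: hs3 => /allP /(_ _ hy); case: y {hy} => // [[i j]] /andP [_ h].
        by rewrite /= (ltn_eqF (leq_ltn_trans h (ltnSn _))).
      by move/cyl_mem: hw1; apply.
    move/cyl_mem: hw2 => /(_ _ hy); move: hy => /mapP [j _ ->] /=; by rewrite eqxx.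
  move/cyl_mem => h; split.
    apply/cyl_mem => y hy; rewrite h ?mem_cat ?hy //.
    move: hs3 => /allP /(_ _ hy); case: y {hy} => // [[i j]] /andP [_ h'].
    by rewrite /= (ltn_eqF (leq_ltn_trans h' (ltnSn _))).
  apply/(row_event w hx hxp)/cyl_mem => y hy.
  rewrite h ?mem_cat ?hy ?orbT //.
  by move: hy => /mapP [j _ ->] /=; rewrite eqxx.
Qed.

Lemma cylrep_ex p : uniq p -> all (fun x => 0 < x)%N p -> exists s v, cylrep p s v.
Proof.
elim/last_ind: p => [|p x IH].
  move=> _ _; exists [::], (fun _ => 0%N); split => //.
  by rewrite /Cp /cyl big_nil; apply/seteqP; split => w.
rewrite rcons_uniq all_rcons => /andP [hxp hu] /andP [hx hall].
have [s [v hr]] := IH hu hall.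
by exists (s ++ rowc p x), (rowv p x v); apply: cylrep_step.
Qed.

Lemma Cp_meas p : uniq p -> all (fun x => 0 < x)%N p -> measurable (Cp p).
Proof.
move=> hu ha; have [s [v [_ h2 _ ->]]] := cylrep_ex hu ha; exact: cyl_meas.
Qed.

Lemma Cp_fin p : uniq p -> all (fun x => 0 < x)%N p -> P (Cp p) = (fine (P (Cp p)))%:E.
Proof.
move=> hu ha; have [s [v [h1 h2 _ ->]]] := cylrep_ex hu ha.
by rewrite /cyl Hind.
Qed.

Lemma prod_row p x v : (0 < x)%N -> x \notin p ->
  \prod_(y <- rowc p x) input_law q y (rowv p x v y) = q ^+ cnt p x * (1 - q).
Proof.
move=> hx hxp; rewrite /rowc big_map big_filter /=.
have iS : forall m n, iota m n.+1 = iota m n ++ [:: m + n] by move=> m n; rewrite -addn1 iotaD.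
have hxe : iota 1 x = iota 1 x.-1 ++ [:: x].
  by case: x hx {hxp} => // x' _; rewrite iS add1n.
rewrite hxe big_cat /= big_cons big_nil /= hxp !eqxx /= mulr1 /cnt.
congr (_ * _); rewrite -prod_const_seq big_seq_cond [RHS]big_seq_cond.
apply: eq_bigr => j /andP [hj _]; move: hj; rewrite mem_iota => hj.
have -> : (j == x) = false by apply/negbTE; lia.
done.
Qed.

Lemma PC_step p x : uniq p -> all (fun x => 0 < x)%N p -> (0 < x)%N -> x \notin p ->
  P (Cp (rcons p x)) = (P (Cp p) * (q ^+ cnt p x * (1 - q))%:E)%E.
Proof.
move=> hu ha hx hxp.
have [s [v hr]] := cylrep_ex hu ha.
have hr' := cylrep_step hu hx hxp hr.
case: hr => [h1 h2 h3 h4]; case: hr' => [h1' h2' h3' h4'].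
rewrite h4' h4 /cyl !Hind // big_cat /= prod_row // -EFinM; congr EFin; congr (_ * _).
rewrite big_seq [RHS]big_seq; apply: eq_bigr => y hy; congr input_law.
move: h3 => /allP /(_ _ hy); case: y {hy} => // [[i j]] /andP [_ h].
by rewrite /= (ltn_eqF (leq_ltn_trans h (ltnSn _))).
Qed.

Lemma PC_nil : P (Cp [::]) = 1%E.
Proof.
have -> : Cp [::] = setT by apply/seteqP; split => w.
exact: probability_setT.
Qed.


Lemma mp_rcons_iff (B : nat -> nat -> bool) p v :
  mallows_prefix B (size p).+1 = rcons p v <->
  mallows_prefix B (size p) = p /\ mallows B (size p).+1 = v.
Proof.
split.
  move=> e; have e1 := congr1 (last 0%N) e; have e2 := congr1 (take (size p)) e.
  rewrite last_rcons in e1.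
  rewrite -cats1 take_size_cat // in e2.
  rewrite (mp_take B (leqnSn _)) in e2; split => //.
  by rewrite /mallows e /= nth_rcons ltnn eqxx.
move=> [h1 h2]; by rewrite mp_S -mallowsS h1 h2.
Qed.

Variables (a : nat -> int) (n : nat).

Definition Ev b p m k : set T :=
  [set w | mallows_prefix (Bw w) (size p) = p /\ go (mallows (Bw w)) a n b (size p) m k].

Fixpoint unionN (E : nat -> set T) N : set T :=
  if N is N'.+1 then unionN E N' `|` E N' else set0.

Lemma unionN_mem E N w : unionN E N w <-> exists v, (v < N)%N /\ E v w.
Proof.
elim: N => [|N IH] /=; first by split => // [[v []]].
split.
  move=> [/IH [v [h1 h2]]|h]; first by exists v; split => //; lia.
  by exists N.
move=> [v [h1 h2]]; case: (ltngtP v N) => h.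
- by left; apply/IH; exists v.
- lia.
- by right; rewrite -h.
Qed.

Lemma unionN_meas E N : (forall v, measurable (E v)) -> measurable (unionN E N).
Proof. by move=> hE; elim: N => //= N IH; apply: measurableU. Qed.

Lemma unionN_prob E N : (forall v, measurable (E v)) ->
  (forall u v, u <> v -> E u `&` E v = set0) ->
  P (unionN E N) = (\sum_(v < N) P (E v))%E.
Proof.
move=> hE hd; elim: N => [|N IH] /=; first by rewrite big_ord0 measure0.
rewrite measureU //; first by rewrite big_ord_recr /= -IH.
- exact: unionN_meas.
apply/seteqP; split => // w [/unionN_mem [v [hv h1]] h2].
have := hd v N ltac:(lia); rewrite -subset0 => /(_ w); apply; by split.
Qed.

Definition Estep b p m k v : set T :=
  if (0 < v)%N && (v \notin p) then
    if (v <= m)%N then Ev b (rcons p v) m k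
    else if v%:Z == m%:Z + a k then Ev b (rcons p v) v k.+1 else set0
  else set0.

Lemma Estep_sub b p m k v : Estep b p m k v `<=` [set w | mallows_prefix (Bw w) (size p).+1 = rcons p v].
Proof.
rewrite /Estep => w; case: ifP => // _; case: ifP => _; last case: ifP => _ //.
- by move=> [+ _]; rewrite size_rcons.
- by move=> [+ _]; rewrite size_rcons.
Qed.

Lemma Estep_disj b p m k u v : u <> v -> Estep b p m k u `&` Estep b p m k v = set0.
Proof.
move=> huv; apply/seteqP; split => // w [/Estep_sub /= h1 /Estep_sub /= h2].
apply: huv; have := congr1 (last 0%N) (etrans (esym h1) h2); by rewrite !last_rcons.
Qed.

Lemma Ev_rec b p m k : (k <= n)%N ->
  Ev b.+1 p m k = unionN (Estep b p m k) (m + absz (a k)).+1.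
Proof.
move=> hk; have hnk : (n < k)%N = false by apply/negbTE; lia.
apply/seteqP; split => w.
  move=> [hp hg]; apply/unionN_mem; move: hg; rewrite /= hnk.
  set v := mallows (Bw w) (size p).+1.
  case: eqP => // hv0.
  have hv' : v = nat_least (rowset (Bw w) p (size p).+1) by rewrite /v mallowsS hp.
  have hnz : nat_least (rowset (Bw w) p (size p).+1) <> 0%N by rewrite -hv'.
  have [[hv1 [hvp _]] _] := nat_least_pos hnz.
  rewrite -hv' in hv1 hvp.
  have hmp : mallows_prefix (Bw w) (size p).+1 = rcons p v by apply/mp_rcons_iff.
  move=> hg; exists v.
  rewrite /Estep hv1 hvp /=.
  case: ifP hg => hvm hg.
    split; first lia.
    by split; rewrite size_rcons.
  move/andP: hg => [/eqP he hg]; split; first lia.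
  rewrite he eqxx; by split; rewrite size_rcons.
move=> /unionN_mem [v [_]]; rewrite /Estep.
case: ifP => [/andP [hv1 hvp]|_ []].
have key : forall m' k', Ev b (rcons p v) m' k' w ->
    mallows_prefix (Bw w) (size p) = p /\ mallows (Bw w) (size p).+1 = v /\
    go (mallows (Bw w)) a n b (size p).+1 m' k'.
  move=> m' k' [h1 h2]; rewrite size_rcons in h1 h2.
  by have [h3 h4] := (proj1 (mp_rcons_iff _ _ _)) h1.
case: ifP => hvm.
  move=> /key [h1 [h2 h3]]; split => //=; rewrite hnk h2 hvm.
  by have -> : (v == 0%N) = false by apply/negbTE; lia.
case: ifP => [/eqP he|_ []]; move=> /key [h1 [h2 h3]]; split => //=; rewrite hnk h2 hvm.
have -> : (v == 0%N) = false by apply/negbTE; lia.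
by rewrite he eqxx.
Qed.

Lemma Ev_done b p m k : (n < k)%N -> Ev b p m k = Cp p.
Proof.
move=> hk; apply/seteqP; split => w; first by case.
by move=> h; split => //; case: b => /=; rewrite hk.
Qed.

Lemma Ev_nil p m k : (k <= n)%N -> Ev 0 p m k = set0.
Proof.
move=> hk; apply/seteqP; split => // w [_] /=.
by have -> : (n < k)%N = false by apply/negbTE; lia.
Qed.

Lemma Ev_meas b : forall p m k, uniq p -> all (fun x => 0 < x)%N p -> measurable (Ev b p m k).
Proof.
elim: b => [|b IH] p m k hu ha.
  case: (ltnP n k) => hk; first by rewrite Ev_done //; exact: Cp_meas.
  by rewrite Ev_nil.
case: (ltnP n k) => hk; first by rewrite Ev_done //; exact: Cp_meas.
rewrite Ev_rec //; apply: unionN_meas => v; rewrite /Estep.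
case: ifP => // /andP [hv hvp].
have hu' : uniq (rcons p v) by rewrite rcons_uniq hvp hu.
have ha' : all (fun x => 0 < x)%N (rcons p v) by rewrite all_rcons hv ha.
case: ifP => _; first exact: IH.
by case: ifP => _ //; exact: IH.
Qed.

Definition Pi k := \prod_(k <= l < n.+1) geom_pmf (1 - q) (a l).

Lemma Pi_end : Pi n.+1 = 1.
Proof. by rewrite /Pi big_geq. Qed.

Lemma Pi_step k : (k <= n)%N -> Pi k = geom_pmf (1 - q) (a k) * Pi k.+1.
Proof. by move=> hk; rewrite /Pi big_ltn. Qed.

Lemma size_le p m : uniq p -> all (fun x => 0 < x <= m)%N p -> (size p <= m)%N.
Proof.
move=> hu ha; have hs : {subset p <= iota 1 m}.
  by move=> x hx; move: ha => /allP /(_ _ hx); rewrite mem_iota; lia.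
by have := uniq_leq_size hu hs; rewrite size_iota.
Qed.

Lemma iotaS1 m k' : iota m k'.+1 = iota m k' ++ [:: m + k']%N.
Proof. by rewrite -addn1 iotaD. Qed.

Lemma tele p m : \sum_(0 <= v < m.+1) (if (0 < v)%N && (v \notin p) then q ^+ cnt p v * (1 - q) else 0)
  = 1 - q ^+ cnt p m.+1.
Proof.
elim: m => [|m IH]; first by rewrite big_nat1 /cnt /= subrr.
rewrite big_nat_recr // IH /cnt.
have -> : (m.+2).-1 = m.+1 by [].
have -> : (m.+1).-1 = m by [].
rewrite iotaS1 count_cat add1n /=.
case: (m.+1 \in p) => /=; rewrite ?addn0 ?addr0 ?addn1 ?exprS //; ring.
Qed.

Lemma cnt_shift p m A : all (fun x => x <= m)%N p -> (0 < A)%N ->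
  cnt p (m + A) = (cnt p m.+1 + A.-1)%N.
Proof.
move=> ha hA; rewrite /cnt /=.
have -> : (m + A).-1 = (m + A.-1)%N by lia.
rewrite iotaD count_cat; congr addn.
have : all (fun j => j \notin p) (iota (1 + m) A.-1).
  apply/allP => j; rewrite mem_iota => hj; apply/negP => hjp.
  move: ha => /allP /(_ _ hjp); lia.
by rewrite all_count size_iota => /eqP.
Qed.

Definition ev p m k (v : nat) : R :=
  if (0 < v)%N && (v \notin p) then
        (if (v <= m)%N then q ^+ cnt p v * (1 - q) * Pi k
         else if v%:Z == m%:Z + a k then q ^+ cnt p v * (1 - q) * Pi k.+1 else 0)
      else 0.

Lemma sum_step p m k : uniq p -> all (fun x => 0 < x <= m)%N p -> (k <= n)%N ->
  \sum_(v < (m + absz (a k)).+1) ev p m k v = Pi k.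
Proof.
move=> hu ha hk.
rewrite -(big_mkord xpredT (ev p m k)) /ev.
rewrite (big_cat_nat _ (n := m.+1)) //=; last lia.
have -> : \sum_(0 <= v < m.+1) (if (0 < v)%N && (v \notin p) then
        (if (v <= m)%N then q ^+ cnt p v * (1 - q) * Pi k
         else if v%:Z == m%:Z + a k then q ^+ cnt p v * (1 - q) * Pi k.+1 else 0)
      else 0) = (1 - q ^+ cnt p m.+1) * Pi k.
  rewrite -tele mulr_suml big_nat_cond [RHS]big_nat_cond; apply: eq_bigr => v.
  rewrite andbT => /andP [_ hv]; rewrite ltnS in hv; rewrite hv.
  by case: ifP => _; rewrite ?mul0r.
have hpm : forall v, (m < v)%N -> v \notin p.
  move=> v hv; apply/negP => hvp; move: ha => /allP /(_ _ hvp); lia.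
case: (ltrP 0 (a k)) => hak.
  have hA : (0 < absz (a k))%N by lia.
  rewrite big_nat_recr /=; last lia.
  rewrite big_nat_cond big1; last first.
    move=> v /andP [/andP [hv1 hv2] _].
    rewrite hpm ?andbT; last lia.
    have -> : (0 < v)%N by lia.
    have -> : (v <= m)%N = false by apply/negbTE; lia.
    have -> : (v%:Z == m%:Z + a k) = false by apply/negbTE; lia.
    done.
  rewrite add0r hpm; last lia.
  have -> : (0 < m + absz (a k))%N by lia.
  have -> : (m + absz (a k) <= m)%N = false by apply/negbTE; lia.
  have -> : ((m + absz (a k))%:Z == m%:Z + a k) by apply/eqP; lia.
  rewrite /= (Pi_step hk) /geom_pmf hak.
  rewrite (cnt_shift _ hA); last by apply/allP => x hx; move: ha => /allP /(_ _ hx); lia.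
  have -> : 1 - (1 - q) = q by ring.
  rewrite exprD; ring.
rewrite big_nat_cond big1; last first.
  move=> v /andP [/andP [hv1 hv2] _].
  case: ifP => // _.
  have -> : (v <= m)%N = false by apply/negbTE; lia.
  have -> : (v%:Z == m%:Z + a k) = false by apply/negbTE; lia.
  done.
rewrite (Pi_step hk) /geom_pmf.
have -> : (0 < a k) = false by apply/negbTE; rewrite -leNgt.
by rewrite !mul0r mulr0 addr0.
Qed.

Lemma Ev_prob b : forall p m k, uniq p -> all (fun x => 0 < x <= m)%N p -> (k <= n.+1)%N ->
  (m + \sum_(k <= l < n.+1) absz (a l) < b + size p)%N ->
  P (Ev b p m k) = (P (Cp p) * (Pi k)%:E)%E.
Proof.
have hpos : forall p m, all (fun x => 0 < x <= m)%N p -> all (fun x => 0 < x)%N p.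
  move=> p m /allP h; apply/allP => x /h; lia.
elim: b => [|b IH] p m k hu ha hk hb.
  case: (ltnP n k) => hnk.
    have -> : k = n.+1 by lia.
    by rewrite Ev_done ?Pi_end ?mule1 //; lia.
  have := size_le hu ha; lia.
case: (ltnP n k) => hnk.
  have -> : k = n.+1 by lia.
  by rewrite Ev_done ?Pi_end ?mule1 //; lia.
rewrite Ev_rec // unionN_prob; last 2 first.
- move=> v; rewrite /Estep; case: ifP => // /andP [hv hvp].
  have hu' : uniq (rcons p v) by rewrite rcons_uniq hvp hu.
  have ha' : all (fun x => 0 < x)%N (rcons p v) by rewrite all_rcons hv (hpos _ _ ha).
  by case: ifP => _; [|case: ifP => _ //]; apply: Ev_meas.
- by move=> u v; apply: Estep_disj.
have hsum : (\sum_(k <= l < n.+1) absz (a l) = absz (a k) + \sum_(k.+1 <= l < n.+1) absz (a l))%N.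
  by rewrite big_ltn.
have -> : (\sum_(v < (m + absz (a k)).+1) P (Estep b p m k v) =
  \sum_(v < (m + absz (a k)).+1) (P (Cp p) * (ev p m k v)%:E))%E.
  apply: eq_bigr => v _; rewrite /Estep /ev.
  case: ifP => [/andP [hv hvp]|_]; last by rewrite measure0 mule0.
  have hu' : uniq (rcons p v) by rewrite rcons_uniq hvp hu.
  case: ifP => hvm.
    rewrite IH //; last by rewrite size_rcons; lia.
      rewrite PC_step ?(hpos _ _ ha) // -muleA -EFinM //.
    by rewrite all_rcons ha hv hvm.
  case: ifP => /eqP he; last by rewrite measure0 mule0.
  rewrite IH //; last by rewrite size_rcons; lia.
    rewrite PC_step ?(hpos _ _ ha) // -muleA -EFinM //.
  rewrite all_rcons leqnn hv /=; apply/allP => x hx; move: ha => /allP /(_ _ hx); lia.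
rewrite Cp_fin ?(hpos _ _ ha) //.
under eq_bigr => v _ do rewrite -EFinM.
by rewrite sumEFin -mulr_sumr sum_step.
Qed.

Definition Zp (B : nat -> nat -> T -> bool) i N : set T :=
  [set w | forall j, (N < j)%N -> ~~ B i.+1 j w].

Definition sK (isp : bool) i N K : seq input_idx :=
  [seq (if isp then inl (i.+1, j) else inr (inl (i.+1, j))) | j <- iota N.+1 K].

Lemma Z_negl (isp : bool) i N : P.-negligible (Zp (if isp then Bp else Bm) i N).
Proof.
pose W := \bigcap_K cyl (sK isp i N K) (fun _ => 0%N).
have hval : forall K, all input_valid (sK isp i N K).
  move=> K; apply/allP => x /mapP [j]; rewrite mem_iota => hj ->; case: (isp) => /=; lia.
have hun : forall K, uniq (sK isp i N K).
  move=> K; rewrite map_inj_uniq ?iota_uniq //; move=> j1 j2; case: (isp) => [[]|[]] //.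
have hWm : measurable W by apply: bigcapT_measurable => K; exact: cyl_meas.
have hle : forall K, (P W <= (q ^+ K)%:E)%E.
  move=> K; apply: (@le_trans _ _ (P (cyl (sK isp i N K) (fun _ => 0%N)))).
    apply: le_measure; [by rewrite inE| rewrite inE; exact: cyl_meas| ].
    by move=> w hw; apply: hw.
  rewrite /cyl Hind // /sK big_map.
  rewrite (eq_bigr (fun _ => q)); last by move=> j _; case: (isp).
  by rewrite prod_const_seq count_predT size_iota.
exists W; split => //.
  have h0 : (0 <= P W)%E by apply: measure_ge0.
  move: (hle) h0; case: (P W) => [x| |] hK h0.
  - have hx : x <= 0.
      by apply: (pow_small hq0 hq1) => K; have := hK K.
    have hx0 : 0 <= x by move: h0; rewrite lee_fin.
    by have -> : x = 0 by apply/eqP; rewrite eq_le hx hx0.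
  - by have := hK 0%N.
  - by [].
move=> w hw K _; apply/cyl_mem => x /mapP [j]; rewrite mem_iota => hj ->.
move: hw; case: (isp) => /= hw; by rewrite (negbTE (hw j ltac:(lia))).
Qed.

Definition goodw w := good_rows (Bw w) /\ good_rows (fun i j => Bm i j w).

Lemma bad_negl : exists N0 : set T, [/\ measurable N0, P N0 = 0%E & forall w, ~ goodw w -> N0 w].
Proof.
pose Bad := \bigcup_i ((\bigcup_N Zp Bp i N) `|` (\bigcup_N Zp Bm i N)).
have : P.-negligible Bad.
  apply: negligible_bigcup => i; apply: negligibleU; apply: negligible_bigcup => N.
    exact: (Z_negl true i N).
  exact: (Z_negl false i N).
move=> [N0 [h1 h2 h3]]; exists N0; split => // w hw; apply: h3.
have : ~ good_rows (Bw w) \/ ~ good_rows (fun i j => Bm i j w).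
  by apply: contrapT => /not_orP [/contrapT ? /contrapT ?]; apply: hw.
have key : forall B : nat -> nat -> T -> bool, ~ good_rows (fun i j => B i j w) ->
    exists i N, Zp B i N w.
  move=> B hB; apply: contrapT => hn; apply: hB => i hi N.
  apply: contrapT => hj; apply: hn; exists i.-1, N => j hNj.
  rewrite prednK //; apply/negP => hb; apply: hj; by exists j.
case=> [/key [i [N h]]|/key [i [N h]]]; exists i => //; [left|right]; by exists N.
Qed.

Lemma main_sec : exists A B : set T,
      [/\ measurable A, measurable B,
          A `<=` [set w | forall i, (i <= n)%N -> record_gap (Xq Bp Bm M w) i = a i],
          [set w | forall i, (i <= n)%N -> record_gap (Xq Bp Bm M w) i = a i] `<=` B
        & P A = (\prod_(i < n.+1) geom_pmf (1 - q) (a i))%:E /\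
          P B = (\prod_(i < n.+1) geom_pmf (1 - q) (a i))%:E].
Proof.
have [N0 [hN0m hN0 hbad]] := bad_negl.
pose E := Ev (Sb a n).+1 [::] 0 0.
have hEm : measurable E by apply: Ev_meas.
have hPE : P E = (\prod_(i < n.+1) geom_pmf (1 - q) (a i))%:E.
  rewrite /E Ev_prob //; last by rewrite /Sb add0n addn0 big_mkord.
  by rewrite PC_nil mul1e /Pi big_mkord.
have hdet : forall w, goodw w -> (E w <->
    forall i, (i <= n)%N -> record_gap (Xq Bp Bm M w) i = a i).
  move=> w [g1 g2]; rewrite /Xq -(det_main (fun i => M i w) a n g1 g2).
  by split => [[_ h]|h]; [|split].
exists (E `\` N0), (E `|` N0); split.
- exact: measurableD.
- exact: measurableU.
- move=> w [hE hN]; apply/hdet => //.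
  by apply: contrapT => hg; apply: hN; apply: hbad.
- move=> w hw; case: (pselect (N0 w)) => hN; first by right.
  left; apply/hdet => //; by apply: contrapT => hg; apply: hN; apply: hbad.
- split.
    rewrite -hPE (measureDI P hEm hN0m).
    match goal with |- context [ ?f (E `&` N0) ] => have h0 : f (E `&` N0) = 0%E end.
      by apply: (subset_measure0 (measurableI _ _ hEm hN0m) hN0m) => // w [].
    by rewrite h0 adde0.
  by rewrite measureU0.
Qed.

End Prob.

Unset Implicit Arguments.
Set Strict Implicit.

Theorem corollary3p3 (R : realType) (d : measure_display) (T : measurableType d)
  (P : probability T R) (q : R) (hq0 : 0 <= q) (hq1 : q < 1)
  (Bp Bm : nat -> nat -> T -> bool) (M : nat -> T -> nat)
  (Hmeas : forall (x : input_idx) (v : nat), input_valid x ->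
     measurable [set w | input_val Bp Bm M x w = v])
  (Hind : forall (s : seq input_idx) (v : input_idx -> nat),
     uniq s -> all input_valid s ->
     P (\big[setI/setT]_(x <- s) [set w | input_val Bp Bm M x w = v x])
       = (\prod_(x <- s) input_law q x (v x))%:E) :
  forall (n : nat) (a : nat -> int),
    exists A B : set T,
      [/\ measurable A, measurable B,
          A `<=` [set w | forall i, (i <= n)%N -> record_gap (Xq Bp Bm M w) i = a i],
          [set w | forall i, (i <= n)%N -> record_gap (Xq Bp Bm M w) i = a i] `<=` B
        & P A = (\prod_(i < n.+1) geom_pmf (1 - q) (a i))%:E /\
          P B = (\prod_(i < n.+1) geom_pmf (1 - q) (a i))%:E].
Proof.
move=> n a; exact: (main_sec hq0 hq1 Hmeas Hind a n).
Qed.
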